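(* In the setting below, assume $Z^j\epsilon_{\bullet,j}\neq0$ for all $j$. If for some constant $c>1$ the penalty level satisfies $$\lambda\ge\frac{c+1}{c-1}\max_{i\in[n]}\Big(\sum_{j\in[p]}\frac{(Z^j_{i,\bullet}\epsilon_{\bullet,j})^2}{\|Z^j\epsilon_{\bullet,j}\|_2^2}\Big)^{1/2},$$ then $\|\widehat\Delta_{O^c,\bullet}\|_{2,1}\le c\,\|\widehat\Delta_{O,\bullet}\|_{2,1}$.
   Context: Setting. Let $n,p\ge 1$, $[n]=\{1,\dots,n\}$. $X=Y+E^*\in\mathbb R^{n\times p}$ where (C1) the rows of $Y$ are independent $\mathcal N_p(\mu^*,\Sigma^* )$, $\Sigma^*$ positive definite; (C2) $E^*$ deterministic, $[n]=I\cup O$ a partition with the rows of $E^*$ indexed by $I$ equal to zero, and every row of $E^*(\Sigma^* )^{-1/2}$ of Euclidean norm at most $M_E\sqrt p$; $\mu^*=0$. $\Omega^*=(\Sigma^* )^{-1}$ with diagonal entries $\omega^*_{jj}$, $B^*=\Omega^*\mathrm{diag}(\Omega^* )^{-1}$, $X^{(n)}=X/\sqrt n$, $\Theta^*=E^*B^*/\sqrt n$, $\xi=X^{(n)}B^*-\Theta^*$, $\epsilon_{ij}=\sqrt n(\omega^*_{jj})^{1/2}\xi_{ij}$ (each column $\epsilon_{\bullet,j}$ is $\mathcal N_n(0,I_n)$ and independent of $X_{\bullet,j^c}$). Notation: $A_{i,\bullet}$, $A_{\bullet,j}$ rows/columns, $A_{K,\bullet}$ rows indexed by $K$, $j^c=[p]\setminus\{j\}$,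 $O^c=I$, $\|A\|_{q_1,q_2}=(\sum_i\|A_{i,\bullet}\|_{q_1}^{q_2})^{1/q_2}$. $Z^j$ is the orthogonal projector in $\mathbb R^n$ onto the orthogonal complement of the span of the columns of $X_{\bullet,j^c}$. Estimator: $\widehat\Theta$ minimizes over $\Theta\in\mathbb R^{n\times p}$ the function $\sum_{j=1}^p\|Z^j(X^{(n)}_{\bullet,j}-\Theta_{\bullet,j})\|_2+\lambda\|\Theta\|_{2,1}$, and $\widehat\Delta=\widehat\Theta-\Theta^*$. *)

(* Defs.v *)
From HB Require Import structures.
From mathcomp Require Import all_boot all_order all_algebra.
Set Implicit Arguments. Unset Strict Implicit. Unset Printing Implicit Defensive.
Import Order.TTheory GRing.Theory Num.Theory.
Local Open Scope ring_scope.

Section Defs.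
Variable R : rcfType.

Definition norm2 (m k : nat) (A : 'M[R]_(m, k)) : R :=
  Num.sqrt (\sum_(i < m) \sum_(j < k) A i j ^+ 2).

Definition norm21 (m k : nat) (A : 'M[R]_(m, k)) : R :=
  \sum_(i < m) norm2 (row i A).

Definition norm21_on (m k : nat) (K : {set 'I_m}) (A : 'M[R]_(m, k)) : R :=
  \sum_(i in K) norm2 (row i A).

Definition posdef (p : nat) (S : 'M[R]_p) : Prop :=
  S^T = S /\ forall v : 'rV[R]_p, v != 0 -> 0 < (v *m S *m v^T) 0 0.

(* P is the orthogonal projector (symmetric idempotent) whose range is the
   row space of S *)
Definition orth_proj (n m : nat) (P : 'M[R]_n) (S : 'M[R]_(m, n)) : Prop :=
  P^T = P /\ P *m P = P /\ (P == S)%MS.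

(* Z^j : orthogonal projector onto the orthogonal complement of the span of the
   columns of X_{.,j^c}; that complement is {u | u *m X_{.,j^c} = 0} = kermx. *)
Definition is_Zj (n p : nat) (X : 'M[R]_(n, p)) (j : 'I_p) (P : 'M[R]_n) : Prop :=
  orth_proj P (kermx (col' j X)).

Definition Omega (p : nat) (Sigma : 'M[R]_p) : 'M[R]_p := invmx Sigma.

(* Bstar = Omega diag(Omega)^{-1} *)
Definition Bstar (p : nat) (Sigma : 'M[R]_p) : 'M[R]_p :=
  \matrix_(k, j) (Omega Sigma k j / Omega Sigma j j).

Definition Xn (n p : nat) (X : 'M[R]_(n, p)) : 'M[R]_(n, p) :=
  (Num.sqrt (n%:R))^-1 *: X.

Definition Thetastar (n p : nat) (Sigma : 'M[R]_p) (E : 'M[R]_(n, p)) : 'M[R]_(n, p) :=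
  (Num.sqrt (n%:R))^-1 *: (E *m Bstar Sigma).

Definition xi (n p : nat) (Sigma : 'M[R]_p) (X E : 'M[R]_(n, p)) : 'M[R]_(n, p) :=
  Xn X *m Bstar Sigma - Thetastar Sigma E.

Definition eps (n p : nat) (Sigma : 'M[R]_p) (X E : 'M[R]_(n, p)) : 'M[R]_(n, p) :=
  \matrix_(i, j) (Num.sqrt (n%:R) * Num.sqrt (Omega Sigma j j) * xi Sigma X E i j).

Definition objective (n p : nat) (X : 'M[R]_(n, p)) (Z : 'I_p -> 'M[R]_n)
    (lambda : R) (Theta : 'M[R]_(n, p)) : R :=
  \sum_(j < p) norm2 (Z j *m (col j (Xn X) - col j Theta)) + lambda * norm21 Theta.

End Defs.

(* Main.v *)
Require Import Defs.
From HB Require Import structures.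
From mathcomp Require Import all_boot all_order all_algebra.
From mathcomp Require Import ring lra.
Import Order.TTheory GRing.Theory Num.Theory.
Local Open Scope ring_scope.

Section Gen.
Variable R : rcfType.
Variable I : finType.
Implicit Types f g : I -> R.

Definition ssq f := \sum_i f i ^+ 2.
Definition ipf f g := \sum_i f i * g i.

Lemma ssq_ge0 f : 0 <= ssq f.
Proof. by apply: sumr_ge0 => i _; rewrite sqr_ge0. Qed.

Lemma ssq_eq0 f : ssq f = 0 -> forall i, f i = 0.
Proof.
move=> h i; have := @psumr_eq0P _ _ xpredT (fun i => f i ^+ 2) (fun i _ => sqr_ge0 (f i)) h i isT.
by move/eqP; rewrite sqrf_eq0 => /eqP.
Qed.

Lemma sqrt_ssq2 f : Num.sqrt (ssq f) ^+ 2 = ssq f.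
Proof. by rewrite sqr_sqrtr // ssq_ge0. Qed.

Lemma CS f g : ipf f g <= Num.sqrt (ssq f) * Num.sqrt (ssq g).
Proof.
set a := Num.sqrt (ssq f); set b := Num.sqrt (ssq g).
have ha : a ^+ 2 = ssq f by apply: sqrt_ssq2.
have hb : b ^+ 2 = ssq g by apply: sqrt_ssq2.
have key : 0 <= \sum_i (b * f i - a * g i) ^+ 2.
  by apply: sumr_ge0 => i _; rewrite sqr_ge0.
have ex : \sum_i (b * f i - a * g i) ^+ 2
   = b ^+ 2 * ssq f + a ^+ 2 * ssq g - (2 * a * b) * ipf f g.
  rewrite /ssq /ipf !mulr_sumr -big_split -sumrB /=.
  by apply: eq_bigr => i _; ring.
rewrite ex ha hb in key.
have a0 : 0 <= a by apply: sqrtr_ge0.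
have b0 : 0 <= b by apply: sqrtr_ge0.
have [ab0|ab0] := eqVneq (a * b) 0.
  move/eqP: ab0; rewrite mulf_eq0 => /orP[] /eqP h.
    have hf : ssq f = 0 by rewrite -ha h expr2 mulr0.
    rewrite /ipf big1 ?h ?mul0r // => i _.
    by rewrite (@ssq_eq0 f hf) mul0r.
  have hg : ssq g = 0 by rewrite -hb h expr2 mulr0.
  rewrite /ipf big1 ?h ?mulr0 // => i _.
  by rewrite (@ssq_eq0 g hg) mulr0.
have abp : 0 < a * b by rewrite lt_def ab0 mulr_ge0.
rewrite -ha -hb in key.
nra.
Qed.

Lemma ssqD f g : ssq (fun i => f i + g i) = ssq f + ssq g + 2 * ipf f g.
Proof.
rewrite /ssq /ipf mulr_sumr -!big_split /=.
by apply: eq_bigr => i _; ring.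
Qed.

Lemma tri f g : Num.sqrt (ssq (fun i => f i + g i))
    <= Num.sqrt (ssq f) + Num.sqrt (ssq g).
Proof.
have a0 := sqrtr_ge0 (ssq f); have b0 := sqrtr_ge0 (ssq g).
rewrite -(ger0_norm (addr_ge0 a0 b0)) -sqrtr_sqr ler_sqrt ?sqr_ge0 //.
rewrite ssqD; have := CS f g; have := sqrt_ssq2 f; have := sqrt_ssq2 g.
set a := Num.sqrt (ssq f); set b := Num.sqrt (ssq g).
move=> hb ha; rewrite -ha -hb; nra.
Qed.

Lemma ssqZ k f : ssq (fun i => k * f i) = k ^+ 2 * ssq f.
Proof. by rewrite /ssq mulr_sumr; apply: eq_bigr => i _; rewrite exprMn. Qed.

Lemma sqrt_ssqZ k f : Num.sqrt (ssq (fun i => k * f i)) = `|k| * Num.sqrt (ssq f).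
Proof. by rewrite ssqZ sqrtrM ?sqr_ge0 // sqrtr_sqr. Qed.

End Gen.
Arguments ssq {R I}.
Arguments ipf {R I}.
Arguments ssq_eq0 {R I}.
Arguments CS {R I}.
Arguments tri {R I}.
Arguments sqrt_ssqZ {R I}.
Arguments sqrt_ssq2 {R I}.
Arguments ssq_ge0 {R I}.

Section Mat.
Variable R : rcfType.

Definition mfun {m k} (A : 'M[R]_(m, k)) := fun p : 'I_m * 'I_k => A p.1 p.2.
Definition mip {m k} (A B : 'M[R]_(m, k)) := \sum_i \sum_j A i j * B i j.

Lemma eq_ssq (I : finType) (f g : I -> R) : f =1 g -> ssq f = ssq g.
Proof. by move=> h; apply: eq_bigr => i _; rewrite h. Qed.

Lemma norm2E m k (A : 'M[R]_(m, k)) : norm2 A = Num.sqrt (ssq (mfun A)).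
Proof. by rewrite /norm2 /ssq pair_big. Qed.

Lemma mipE m k (A B : 'M[R]_(m, k)) : mip A B = ipf (mfun A) (mfun B).
Proof. by rewrite /mip /ipf pair_big. Qed.

Lemma norm2_ge0 m k (A : 'M[R]_(m, k)) : 0 <= norm2 A.
Proof. exact: sqrtr_ge0. Qed.

Lemma norm2_CS m k (A B : 'M[R]_(m, k)) : mip A B <= norm2 A * norm2 B.
Proof. by rewrite mipE !norm2E; apply: CS. Qed.

Lemma norm2_tri m k (A B : 'M[R]_(m, k)) : norm2 (A + B) <= norm2 A + norm2 B.
Proof.
rewrite !norm2E (@eq_ssq _ _ (fun p => mfun A p + mfun B p)); first exact: tri.
by move=> p; rewrite /mfun mxE.
Qed.

Lemma norm2Z m k (c : R) (A : 'M[R]_(m, k)) : norm2 (c *: A) = `|c| * norm2 A.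
Proof.
rewrite !norm2E (@eq_ssq _ _ (fun p => c * mfun A p)); first exact: sqrt_ssqZ.
by move=> p; rewrite /mfun mxE.
Qed.

Lemma norm2N m k (A : 'M[R]_(m, k)) : norm2 (- A) = norm2 A.
Proof. by rewrite -scaleN1r norm2Z normrN normr1 mul1r. Qed.

Lemma norm2_sq m k (A : 'M[R]_(m, k)) : norm2 A ^+ 2 = mip A A.
Proof.
rewrite norm2E sqrt_ssq2 mipE /ssq /ipf.
by apply: eq_bigr => i _; rewrite expr2.
Qed.

Lemma norm2_gt0 m k (A : 'M[R]_(m, k)) : A != 0 -> 0 < norm2 A.
Proof.
move=> hA; rewrite lt_def norm2_ge0 andbT norm2E sqrtr_eq0 -ltNge.
rewrite lt_def ssq_ge0 andbT; apply/eqP => h; move/eqP: hA; apply.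
apply/matrixP => i j; rewrite mxE.
have := @ssq_eq0 _ _ (mfun A) h (i, j); by [].
Qed.

Lemma mipB m k (A B C : 'M[R]_(m, k)) : mip A (B - C) = mip A B - mip A C.
Proof.
rewrite /mip -sumrB; apply: eq_bigr => i _; rewrite -sumrB.
by apply: eq_bigr => j _; rewrite !mxE mulrBr.
Qed.

Lemma mipZl m k c (A B : 'M[R]_(m, k)) : mip (c *: A) B = c * mip A B.
Proof.
rewrite /mip mulr_sumr; apply: eq_bigr => i _; rewrite mulr_sumr.
by apply: eq_bigr => j _; rewrite !mxE mulrA.
Qed.

Lemma mip_tr m k (A B : 'M[R]_(m, k)) : mip A B = \tr (A^T *m B).
Proof.
rewrite /mxtrace /mip exchange_big; apply: eq_bigr => j _; rewrite mxE.
by apply: eq_bigr => i _; rewrite mxE.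
Qed.

Lemma mip_mul m k (A : 'M[R]_(m, k)) (Z : 'M[R]_m) (d : 'M[R]_(m, k)) : mip A (Z *m d) = mip (Z^T *m A) d.
Proof. by rewrite !mip_tr mulmxA trmx_mul trmxK. Qed.

Lemma F1 m k (a b : 'M[R]_(m, k)) : a != 0 ->
  norm2 a - mip a b / norm2 a <= norm2 (a - b).
Proof.
move=> ha; have hN : 0 < norm2 a by exact: norm2_gt0.
have -> : norm2 a - mip a b / norm2 a = (norm2 a ^+ 2 - mip a b) / norm2 a.
  by field; rewrite gt_eqF.
rewrite ler_pdivrMr // norm2_sq -mipB mulrC; exact: norm2_CS.
Qed.

End Mat.
Arguments mip {R m k}.
Arguments mfun {R m k}.

Section Main.
Variable R : rcfType.

Lemma colB m k (A B : 'M[R]_(m, k)) j : col j (A - B) = col j A - col j B.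
Proof. by apply/matrixP => i l; rewrite !mxE. Qed.

Lemma rowD m k (A B : 'M[R]_(m, k)) i : row i (A + B) = row i A + row i B.
Proof. by apply/matrixP => a l; rewrite !mxE. Qed.

Lemma norm2_0 m k : norm2 (0 : 'M[R]_(m, k)) = 0.
Proof.
rewrite /norm2 big1 ?sqrtr0 // => i _; rewrite big1 // => j _.
by rewrite mxE expr2 mulr0.
Qed.

Lemma Zcol n p (Z : 'M[R]_n) (Y : 'M[R]_(n, p)) (B : 'M[R]_p) j :
  Z *m col' j Y = 0 -> B j j = 1 -> Z *m col j (Y *m B) = Z *m col j Y.
Proof.
move=> hZ hB.
have W0 : forall i r, r != j -> (Z *m Y) i r = 0.
  move=> i r hr; case: (unliftP j r) => [r' ->|]; last by move=> e; rewrite e eqxx in hr.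
  have h0 := congr1 (fun M : 'M[R]_(n, p.-1) => M i r') hZ; rewrite /= !mxE in h0.
  rewrite mxE -[RHS]h0; apply: eq_bigr => l _; by rewrite mxE.
rewrite colE mulmxA -colE mulmxA.
apply/matrixP => i k; rewrite !mxE (bigD1 j) //= big1 ?addr0.
  rewrite hB mulr1 mxE; apply: eq_bigr => l _; by rewrite !mxE.
move=> r hr; rewrite W0 ?mul0r //.
Qed.

Lemma bound_P n p (e : 'I_p -> 'M[R]_(n, 1)) (D : 'M[R]_(n, p)) :
  \sum_(j < p) mip (e j) (col j D) / norm2 (e j)
  <= \big[Num.max/0]_(i < n)
      Num.sqrt (\sum_(j < p) (e j i ord0) ^+ 2 / (norm2 (e j)) ^+ 2)
     * \sum_(i < n) norm2 (row i D).
Proof.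
set m := \big[Num.max/0]_(i < n) _.
have -> : \sum_(j < p) mip (e j) (col j D) / norm2 (e j)
   = \sum_(i < n) \sum_(j < p) (e j i ord0 / norm2 (e j)) * D i j.
  rewrite exchange_big; apply: eq_bigr => j _; rewrite /mip mulr_suml.
  apply: eq_bigr => i _; rewrite big_ord1 !mxE; ring.
rewrite mulr_sumr; apply: ler_sum => i _.
apply: le_trans (CS (fun j => e j i ord0 / norm2 (e j)) (fun j => D i j)) _.
have -> : Num.sqrt (ssq (fun j => D i j)) = norm2 (row i D).
  rewrite /norm2 big_ord1; congr Num.sqrt; apply: eq_bigr => j _; by rewrite mxE.
apply: ler_wpM2r; first exact: norm2_ge0.
have -> : ssq (fun j => e j i ord0 / norm2 (e j))
   = \sum_(j < p) (e j i ord0) ^+ 2 / (norm2 (e j)) ^+ 2.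
  by apply: eq_bigr => j _; rewrite expr_div_n.
rewrite /m; exact: (le_bigmax 0 (fun i => Num.sqrt (\sum_(j < p) (e j i ord0) ^+ 2 / (norm2 (e j)) ^+ 2)) i).
Qed.

Lemma splitO n (O : {set 'I_n}) (F : 'I_n -> R) :
  \sum_(i < n) F i = \sum_(i in O) F i + \sum_(i in ~: O) F i.
Proof.
rewrite (bigID (fun i => i \in O)) /=; congr (_ + _).
by apply: eq_bigl => i; rewrite in_setC.
Qed.

Lemma final (lam c m S0 S1 : R) : 1 < c -> 0 < m -> 0 <= S0 -> 0 <= S1 ->
  (c + 1) / (c - 1) * m <= lam -> lam * (S1 - S0) <= m * (S0 + S1) ->
  S1 <= c * S0.
Proof.
move=> hc hm h0 h1 hl hk.
have c1 : 0 < c - 1 by rewrite subr_gt0.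
have H : (c + 1) * m <= (c - 1) * lam.
  rewrite -ler_pdivrMl // mulrA; by rewrite (mulrC _ (c + 1)).
have hl0 : 0 < lam by nra.
have H2 : (c + 1) * (lam * (S1 - S0)) <= (c + 1) * (m * (S0 + S1)).
  by rewrite ler_pM2l //; lra.
have H3 : (c + 1) * m * (S0 + S1) <= (c - 1) * lam * (S0 + S1).
  by apply: ler_wpM2r => //; lra.
have H4 : lam * (S1 - c * S0) <= 0 by nra.
nra.
Qed.


End Main.

Theorem mainTheorem4 (R : rcfType) (n p : nat) (hn : (0 < n)%N) (hp : (0 < p)%N)
  (Sigma : 'M[R]_p) (Sinvhalf : 'M[R]_p) (E X : 'M[R]_(n, p)) (O : {set 'I_n})
  (M_E : R) (Z : 'I_p -> 'M[R]_n) (lam c : R) (Thetahat : 'M[R]_(n, p)) :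
  posdef Sigma ->
  posdef Sinvhalf -> Sinvhalf *m Sinvhalf = invmx Sigma ->
  (forall i, i \notin O -> row i E = 0) ->
  (forall i, norm2 (row i (E *m Sinvhalf)) <= M_E * Num.sqrt (p%:R)) ->
  (forall j, is_Zj X j (Z j)) ->
  (forall Theta, objective X Z lam Thetahat <= objective X Z lam Theta) ->
  (forall j, Z j *m col j (eps Sigma X E) != 0) ->
  1 < c ->
  (c + 1) / (c - 1) *
    \big[Num.max/0]_(i < n)
      Num.sqrt (\sum_(j < p)
         ((Z j *m col j (eps Sigma X E)) i ord0) ^+ 2
           / (norm2 (Z j *m col j (eps Sigma X E))) ^+ 2)
    <= lam ->
  norm21_on (~: O) (Thetahat - Thetastar Sigma E)
    <= c * norm21_on O (Thetahat - Thetastar Sigma E).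
Proof.
move=> _ _ _ hE _ hZ hopt hne hc hlam.
set m := \big[Num.max/0]_(i < n) _ in hlam.
set T := Thetastar Sigma E.
set D := Thetahat - T.
pose e j := Z j *m col j (eps Sigma X E).
pose a j := Z j *m (col j (Xn X) - col j T).
pose kap (j : 'I_p) := Num.sqrt (n%:R) * Num.sqrt (Omega Sigma j j).
have hZ0 : forall j, Z j *m col' j X = 0.
  move=> j; case: (hZ j) => _ [_ /andP[h _]]; exact/sub_kermxP.
have hZT : forall j, (Z j)^T = Z j by move=> j; case: (hZ j).
have hZZ : forall j, Z j *m Z j = Z j by move=> j; case: (hZ j) => _ [].
have he : forall j, e j = kap j *: (Z j *m col j (xi Sigma X E)).
  move=> j; rewrite /e scalemxAr; congr (_ *m _); apply/matrixP => i k.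
  by rewrite !mxE /kap.
have hkap : forall j, 0 < kap j.
  move=> j; have := hne j; rewrite -/(e j) he.
  case: (eqVneq (kap j) 0) => [->|h]; first by rewrite scale0r eqxx.
  by move=> _; rewrite lt_def h mulr_ge0 // sqrtr_ge0.
have hom : forall j, Omega Sigma j j != 0.
  move=> j; apply/eqP=> h; have := hkap j; by rewrite /kap h sqrtr0 mulr0 ltxx.
have hB : forall j, Bstar Sigma j j = 1 by move=> j; rewrite mxE divff.
have hXn : forall j, Z j *m col' j (Xn X) = 0.
  move=> j; have -> : col' j (Xn X) = (Num.sqrt n%:R)^-1 *: col' j X.
    by apply/matrixP=> i k; rewrite !mxE.
  by rewrite -scalemxAr hZ0 scaler0.
have hxa : forall j, Z j *m col j (xi Sigma X E) = a j.
  by move=> j; rewrite /xi colB mulmxBr Zcol // -mulmxBr.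
have hea : forall j, e j = kap j *: a j by move=> j; rewrite he hxa.
have ha0 : forall j, a j != 0.
  move=> j; apply/eqP => h; have := hne j; by rewrite -/(e j) hea h scaler0 eqxx.
have haZ : forall j, (Z j)^T *m a j = a j by move=> j; rewrite hZT /a mulmxA hZZ.
have hj : forall j, norm2 (a j) - mip (e j) (col j D) / norm2 (e j)
    <= norm2 (Z j *m (col j (Xn X) - col j Thetahat)).
  move=> j.
  have -> : Z j *m (col j (Xn X) - col j Thetahat) = a j - Z j *m col j D.
    by rewrite /a -mulmxBr /D colB opprB addrA subrK.
  have -> : mip (e j) (col j D) / norm2 (e j)
      = mip (a j) (Z j *m col j D) / norm2 (a j).
    have hN : 0 < norm2 (a j) by exact: norm2_gt0.
    rewrite mip_mul haZ hea mipZl norm2Z gtr0_norm ?hkap //.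
    by rewrite -mulf_div divff ?mul1r // gt_eqF ?hkap.
  exact: F1.
set P := \sum_(j < p) mip (e j) (col j D) / norm2 (e j).
have hsum : \sum_(j < p) norm2 (a j) - P
    <= \sum_(j < p) norm2 (Z j *m (col j (Xn X) - col j Thetahat)).
  by rewrite /P -sumrB; apply: ler_sum => j _; exact: hj.
have hP : P <= m * \sum_(i < n) norm2 (row i D) := @bound_P R n p e D.
have eTh : Thetahat = T + D by rewrite /D addrC subrK.
have hrow : norm21_on (~: O) D - norm21_on O D <= norm21 Thetahat - norm21 T.
  rewrite /norm21 -sumrB (@splitO R n O) /norm21_on.
  have h1 : - \sum_(i in O) norm2 (row i D)
      <= \sum_(i in O) (norm2 (row i Thetahat) - norm2 (row i T)).
    rewrite -sumrN; apply: ler_sum => i _.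
    rewrite eTh [row i (T + D)]rowD.
    have := @norm2_tri R 1 p (row i T + row i D) (- row i D).
    rewrite addrK norm2N; lra.
  have h2 : \sum_(i in ~: O) norm2 (row i D)
      <= \sum_(i in ~: O) (norm2 (row i Thetahat) - norm2 (row i T)).
    apply: ler_sum => i; rewrite in_setC => hi.
    have hrT : row i T = 0.
      apply/matrixP => u l; rewrite !mxE big1 ?mulr0 // => k _.
      have := congr1 (fun M : 'M[R]_(1, p) => M 0 k) (hE i hi); rewrite !mxE => ->.
      by rewrite mul0r.
    by rewrite eTh [row i (T + D)]rowD hrT add0r norm2_0 subr0.
  lra.
have hS : \sum_(i < n) norm2 (row i D) = norm21_on O D + norm21_on (~: O) D.
  by rewrite (@splitO R n O).
have hm : 0 < m.
  pose j0 := Ordinal hp.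
  have [i hi] : exists i, e j0 i ord0 != 0.
    case: (pickP (fun i => e j0 i ord0 != 0)) => [i hi|h]; first by exists i.
    exfalso; move/eqP: (hne j0); apply; apply/matrixP => i k.
    rewrite (ord1 k) [RHS]mxE; apply/eqP; have := h i; by move/negbFE.
  apply: lt_le_trans (le_bigmax 0 (fun i => Num.sqrt (\sum_(j < p)
         ((Z j *m col j (eps Sigma X E)) i ord0) ^+ 2
           / (norm2 (Z j *m col j (eps Sigma X E))) ^+ 2)) i).
  rewrite sqrtr_gt0 (bigD1 j0) //=.
  have f0 : 0 < (e j0 i ord0) ^+ 2 / (norm2 (e j0)) ^+ 2.
    apply: divr_gt0; first by rewrite lt_def sqr_ge0 andbT sqrf_eq0.
    by apply: exprn_gt0; apply: norm2_gt0; apply: hne.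
  have f1 : 0 <= \sum_(j < p | j != j0) ((Z j *m col j (eps Sigma X E)) i ord0) ^+ 2
           / (norm2 (Z j *m col j (eps Sigma X E))) ^+ 2.
    by apply: sumr_ge0 => j _; apply: divr_ge0; apply: sqr_ge0.
  rewrite /e in f0; lra.
have hl0 : 0 <= lam.
  apply: le_trans hlam; apply: mulr_ge0; last exact: ltW.
  apply: divr_ge0; lra.
have hk : lam * (norm21_on (~: O) D - norm21_on O D)
    <= lam * (norm21 Thetahat - norm21 T) by apply: ler_wpM2l.
have hS0 : 0 <= norm21_on O D by apply: sumr_ge0 => i _; exact: norm2_ge0.
have hS1 : 0 <= norm21_on (~: O) D by apply: sumr_ge0 => i _; exact: norm2_ge0.
have ho' : \sum_(j < p) norm2 (Z j *m (col j (Xn X) - col j Thetahat))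
    + lam * norm21 Thetahat <= \sum_(j < p) norm2 (a j) + lam * norm21 T := hopt T.
rewrite hS in hP.
apply: (@final R lam c m _ _ hc hm hS0 hS1 hlam).
lra.
Qed.
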